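(* Let $X$ be a compact Hausdorff space and $\phi_1,\dots,\phi_m$ real-valued continuous functions on $X$. Let $\mathcal C(X,1,\boldsymbol\phi)$ be the set of positive scalar Borel measures $\mu$ on $X$ with $\mu(X)=1$ and $\int_X\phi_i\,d\mu=0$ for $i=1,\dots,m$. Suppose $\mu=\sum_{j=1}^n w_j\delta_{x_j}$ where $1\le n\le m+1$, $x_1,\dots,x_n$ are distinct points of $X$, and the real numbers $w_j$ satisfy $w_j>0$, $\sum_{j=1}^nw_j=1$, and $\sum_{j=1}^n\phi_i(x_j)w_j=0$ for $i=1,\dots,m$. Write $\boldsymbol\phi(x_j)=(\phi_1(x_j),\dots,\phi_m(x_j))^{T}\in\mathbb{R}^m$. Then $\mu$ is an extreme point of $\mathcal C(X,1,\boldsymbol\phi)$ if and only if $0=\sum_{j=1}^nw_j\boldsymbol\phi(x_j)$ is an interior point of the convex hull of $\{\boldsymbol\phi(x_1),\dots,\boldsymbol\phi(x_n)\}$ in $\mathbb{R}^m$.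
   Context: $\delta_x$ denotes the unit point-mass at $x$. A vector $v$ is an interior point of the convex hull of $\{u_1,\dots,u_n\}\subset\mathbb R^m$ if $v=\sum_j\lambda_ju_j$ with $\lambda_j>0$, $\sum_j\lambda_j=1$, and the coefficients $\lambda_1,\dots,\lambda_n$ are uniquely determined by these conditions. *)

(* Defs.v *)
From HB Require Import structures.
From mathcomp Require Import all_boot all_order all_algebra.
From mathcomp Require Import all_classical all_reals all_analysis.
Set Implicit Arguments. Unset Strict Implicit. Unset Printing Implicit Defensive.
Import Order.TTheory GRing.Theory Num.Theory.
Local Open Scope classical_set_scope.
Local Open Scope ring_scope.

Definition Borel (X : ptopologicalType) := g_sigma_algebraType (@open X).

Definition Cset (R : realType) (X : ptopologicalType) (m : nat)
    (phi : 'I_m -> X -> R) (mu : {measure set (Borel X) -> \bar R}) : Prop :=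
  mu setT = 1%E /\ forall i : 'I_m, (\int[mu]_x (phi i x)%:E = 0)%E.

(* Extreme point of a convex set P of measures (measures are identified
   when they agree on all measurable sets). *)
Definition extreme_measure (R : realType) (X : ptopologicalType)
    (P : {measure set (Borel X) -> \bar R} -> Prop)
    (mu : {measure set (Borel X) -> \bar R}) : Prop :=
  P mu /\
  forall (nu1 nu2 : {measure set (Borel X) -> \bar R}) (t : R),
    P nu1 -> P nu2 -> 0 < t < 1 ->
    (forall A : set (Borel X), measurable A ->
       mu A = (t%:E * nu1 A + (1 - t)%:E * nu2 A)%E) ->
    forall A : set (Borel X), measurable A -> nu1 A = nu2 A.

Definition interior_conv_point (R : realType) (m n : nat)
    (v : 'rV[R]_m) (u : 'I_n -> 'rV[R]_m) : Prop :=
  exists lam : 'I_n -> R,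
    [/\ forall j, 0 < lam j,
        \sum_(j < n) lam j = 1,
        v = \sum_(j < n) lam j *: u j &
        forall lam' : 'I_n -> R,
          (forall j, 0 < lam' j) -> \sum_(j < n) lam' j = 1 ->
          v = \sum_(j < n) lam' j *: u j -> forall j, lam' j = lam j].

(* Main.v *)
Require Import Defs.
From HB Require Import structures.
From mathcomp Require Import all_boot all_order all_algebra.
From mathcomp Require Import all_classical all_reals all_analysis.
From mathcomp Require Import measurable_realfun.
From mathcomp Require Import ring lra.
Import Order.TTheory GRing.Theory Num.Theory numFieldNormedType.Exports.
Local Open Scope classical_set_scope.
Local Open Scope ring_scope.

Section Gen.
Context d (T : measurableType d) (R : realType) (n : nat) (x : 'I_n -> T).

Definition mkm (a : 'I_n -> R) (ha : forall j, 0 <= a j) (k : nat)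
  : {measure set T -> \bar R} :=
  match insub k with
  | Some j => mscale (NngNum (ha j)) (@dirac _ T (x j) R)
  | None => mzero
  end.

Definition dmeas a ha : {measure set T -> \bar R} := msum (@mkm a ha) n.

Lemma dmeasE a ha A : @dmeas a ha A = (\sum_(j < n) (a j)%:E * \d_(x j) A)%E.
Proof.
rewrite /dmeas /msum /=; apply: eq_bigr => j _.
by rewrite /mkm valK.
Qed.

Lemma int_dmeas a ha (f : T -> R) : measurable_fun setT f ->
  (\int[@dmeas a ha]_y (f y)%:E = (\sum_(j < n) a j * f (x j))%:E)%E.
Proof.
move=> mf.
have mfe := proj2 (measurable_EFinP _ _) mf.
have key (g : T -> \bar R) : (forall y, 0 <= g y)%E -> measurable_fun setT g ->
   (\int[@dmeas a ha]_y g y = \sum_(j < n) (a j)%:E * g (x j))%E.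
  move=> g0 mg; rewrite /dmeas ge0_integral_measure_sum//.
  apply: eq_bigr => j _; rewrite /mkm valK ge0_integral_mscale//.
  by rewrite integral_dirac// diracE in_setT mul1e.
rewrite integralE key//; last exact: measurable_funepos.
rewrite key//; last exact: measurable_funeneg.
rewrite (eq_bigr (fun j => (a j * Num.max (f (x j)) 0)%:E)); last first.
  by move=> j _; rewrite funeposE -EFin_max EFinM.
rewrite [X in (_ - X)%E](eq_bigr (fun j => (a j * Num.max (- f (x j)) 0)%:E)); last first.
  by move=> j _; rewrite funenegE -EFin_max EFinM.
rewrite !sumEFin -EFinB -sumrB; congr (_%:E); apply: eq_bigr => j _.
rewrite -mulrBr; congr (_ * _).
have [h|h] := lerP 0 (f (x j)).
  have h2 : - f (x j) <= 0 by rewrite oppr_le0.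
  by rewrite (max_idPr h2) subr0.
have h2 : 0 <= - f (x j) by rewrite oppr_ge0 ltW.
by rewrite (max_idPl h2) sub0r opprK.
Qed.


Lemma memU (P : pred 'I_n) (F : 'I_n -> set T) y :
  (\big[setU/set0]_(j < n | P j) F j) y <-> exists2 j, P j & F j y.
Proof.
rewrite -bigcup_seq_cond; split => [[j /andP[_ Pj] Fj]|[j Pj Fj]].
  by exists j.
by exists j => //; rewrite /= mem_index_enum Pj.
Qed.

Hypothesis mx : forall j, measurable [set x j].
Hypothesis xinj : injective x.

Lemma dmeas1 a ha k : @dmeas a ha [set x k] = (a k)%:E.
Proof.
rewrite dmeasE (bigD1 k) //= diracE mem_set // mule1 big1 ?adde0 // => j jk.
by rewrite diracE memNset ?mule0 // => /xinj /eqP; rewrite (negbTE jk).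
Qed.

Definition S := \big[setU/set0]_(j < n) [set x j].

Lemma mS : measurable S.
Proof. by apply: bigsetU_measurable => j _; exact: mx. Qed.

Lemma decomp (nu : {measure set T -> \bar R}) : nu (~` S) = 0%E ->
  forall A, measurable A ->
  nu A = (\sum_(j < n) nu [set x j] * \d_(x j) A)%E.
Proof.
move=> h0 A mA.
have hD : nu (A `\` S) = 0%E.
  apply/eqP; rewrite -measure_le0 -h0; apply: le_measure; rewrite ?inE.
  - by apply: measurableD => //; exact: mS.
  - by apply: measurableC; exact: mS.
  by move=> y [].
have hI : A `&` S = \big[setU/set0]_(j < n | `[< A (x j) >]) [set x j].
  apply/seteqP; split => y.
    move=> [Ay /(memU xpredT) [j _ yj]]; rewrite /= in yj; subst y; apply/(memU (fun j => `[< A (x j)>])).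
    by exists j => //; apply/asboolP.
  move=> /(memU (fun j => `[< A (x j)>])) [j /asboolP Aj ->]; split => //.
  by apply/(memU xpredT); exists j.
transitivity (0 + nu (\big[setU/set0]_(j < n | `[< A (x j) >]) [set x j]))%E.
  by rewrite (measureDI nu mA mS) -hI; congr (_ + _)%E; exact: hD.
rewrite add0e measure_bigsetU_ord //; last first.
  by move=> i j _ _ [y [/= -> ]] /xinj.
rewrite big_mkcond /=; apply: eq_bigr => j _.
rewrite diracE; case: (boolP `[< A (x j) >]) => /asboolP h.
  by rewrite mem_set // mule1.
by rewrite memNset // mule0.
Qed.

End Gen.
Lemma open_meas (X : ptopologicalType) (A : set X) : open A ->
  measurable (A : set (Borel X)).
Proof. by move=> oA; apply: sub_sigma_algebra. Qed.

Lemma set1_meas (X : ptopologicalType) (hX : hausdorff_space X) (y : X) :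
  measurable ([set y] : set (Borel X)).
Proof.
have c : closed [set y] := @accessible_closed_set1 _ (hausdorff_accessible hX) y.
rewrite -[X in measurable X]setCK; apply: measurableC; apply: open_meas.
exact: closed_openC.
Qed.

Lemma cont_meas (R : realType) (X : ptopologicalType) (f : X -> R) :
  continuous f -> measurable_fun [set: Borel X] (f : Borel X -> R).
Proof.
move=> /continuousP cf; apply: (measurability _ (RGenOpens.measurableE R)).
move=> _ [_ [a [b ->]] <-]; rewrite setTI; apply: open_meas.
exact/cf/interval_open.
Qed.
Arguments dmeas {d T R n} x a ha.
Arguments decomp {d T R n x} mx xinj nu _ A _.
Arguments int_dmeas {d T R n} x a ha f _.
Arguments dmeas1 {d T R n x} xinj a ha k.
Arguments S {d T n} x.
Arguments mS {d T n x} mx.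

Theorem theorem3p3 (R : realType) (X : ptopologicalType)
    (hX : hausdorff_space X) (cX : compact [set: X])
    (m n : nat) (phi : 'I_m -> X -> R)
    (cphi : forall i : 'I_m, continuous (phi i))
    (hn1 : (1 <= n)%N) (hnm : (n <= m.+1)%N)
    (x : 'I_n -> X) (xinj : injective x) (w : 'I_n -> R)
    (wpos : forall j, 0 < w j) (wsum : \sum_(j < n) w j = 1)
    (wmom : forall i : 'I_m, \sum_(j < n) phi i (x j) * w j = 0)
    (mu : {measure set (Borel X) -> \bar R})
    (hmu : forall A : set (Borel X), measurable A ->
       mu A = (\sum_(j < n) (w j)%:E * @dirac _ (Borel X) (x j) R A)%E) :
  extreme_measure (Cset phi) mu <->
  interior_conv_point 0 (fun j => \row_(i < m) phi i (x j)).
Proof.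
have mx : forall j, measurable ([set x j] : set (Borel X)).
  by move=> j; exact: set1_meas.
have mphi i : measurable_fun setT (phi i : Borel X -> R) by exact: cont_meas.
have rowE (lam : 'I_n -> R) : (0 = \sum_(j < n) lam j *: \row_(i < m) phi i (x j)) <->
    (forall i, \sum_(j < n) lam j * phi i (x j) = 0).
  split => [h i|h].
    move/rowP/(_ i): h; rewrite mxE summxE => h.
    transitivity (\sum_(j < n) (lam j *: \row_(i < m) phi i (x j)) 0 i).
      by apply: eq_bigr => j _; rewrite !mxE.
    by rewrite -h.
  apply/rowP => i; rewrite mxE summxE.
  transitivity (\sum_(j < n) lam j * phi i (x j)); first by rewrite h.
  by apply: eq_bigr => j _; rewrite !mxE.
have wmom' i : \sum_(j < n) w j * phi i (x j) = 0.
  rewrite -[RHS](wmom i); apply: eq_bigr => j _; exact: mulrC.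
have wge0 j : 0 <= w j by exact: ltW.
have muE A : measurable A -> mu A = @dmeas _ (Borel X) R n x w wge0 A by move=> mA; rewrite hmu // dmeasE.
have sumT (a : 'I_n -> R) :
    (\sum_(j < n) (a j)%:E * @dirac _ (Borel X) (x j) R setT = (\sum_(j < n) a j)%:E)%E.
  by rewrite -sumEFin; apply: eq_bigr => j _; rewrite diracE in_setT mule1.
have Cmu : Cset phi mu.
  split; first by rewrite muE // dmeasE sumT wsum.
  move=> i; rewrite (eq_measure_integral (@dmeas _ (Borel X) R n x w wge0)); last by move=> A mA _; exact: muE.
  by rewrite int_dmeas // wmom'.
pose SS := @S _ (Borel X) n x.
have mSS : measurable SS := mS mx.
have concen (nu : {measure set (Borel X) -> \bar R}) : Cset phi nu -> nu (~` SS) = 0%E ->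
    (forall lam' : 'I_n -> R, (forall j, 0 < lam' j) -> \sum_(j < n) lam' j = 1 ->
      (forall i, \sum_(j < n) lam' j * phi i (x j) = 0) -> forall j, lam' j = w j) ->
    forall A, measurable A -> nu A = mu A.
  move=> [nuT nuI] h0 U A mA.
  have dA := decomp mx xinj nu h0.
  pose a j := fine (nu [set x j]).
  have nufin j : nu [set x j] = (a j)%:E.
    rewrite /a fineK // ge0_fin_numE ?measure_ge0 //.
    apply: (@le_lt_trans _ _ (nu setT)); last by rewrite nuT ltry.
    by apply: le_measure; rewrite ?inE.
  have age0 j : 0 <= a j by rewrite /a fine_ge0 // measure_ge0.
  have nuE B : measurable B -> nu B = @dmeas _ (Borel X) R n x a age0 B.
    by move=> mB; rewrite dA // dmeasE; apply: eq_bigr => j _; rewrite nufin.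
  have asum : \sum_(j < n) a j = 1.
    by move: nuT; rewrite nuE // dmeasE sumT => /eqP; rewrite eqe => /eqP.
  have amom i : \sum_(j < n) a j * phi i (x j) = 0.
    move: (nuI i); rewrite (eq_measure_integral (@dmeas _ (Borel X) R n x a age0)).
      by rewrite int_dmeas // => /eqP; rewrite eqe => /eqP.
    by move=> B mB _; exact: nuE.
  have aw j : a j = w j.
    pose l k := (w k + a k) / 2.
    have lj : l j = w j -> a j = w j by rewrite /l => h; have := wpos j; lra.
    apply: lj; apply: U.
    - by move=> k; rewrite /l; have := wpos k; have := age0 k; lra.
    - by rewrite /l -mulr_suml big_split /= wsum asum; lra.
    move=> i; rewrite (eq_bigr (fun k => (w k * phi i (x k) + a k * phi i (x k)) / 2)).
      by rewrite -mulr_suml big_split /= wmom' amom addr0 mul0r.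
    by move=> k _; rewrite /l mulrAC mulrDl.
  rewrite nuE // hmu // dmeasE; apply: eq_bigr => j _; rewrite aw //.
split.
  move=> [_ ext]; exists w; split => //; first by apply/rowE.
  move=> l lp ls /rowE lm j.
  have l0 k : 0 <= l k by exact: ltW.
  pose s := \sum_(k < n) l k / w k.
  have sj k : l k / w k <= s.
    rewrite /s (bigD1 k) //= lerDl; apply: sumr_ge0 => i _.
    by apply: divr_ge0 => //; exact: ltW.
  have s0 : 0 < s.
    apply: lt_le_trans (sj (Ordinal hn1)); exact: divr_gt0.
  pose t := 1 / (1 + s).
  have t0 : 0 < t by rewrite /t divr_gt0 //; lra.
  have t1 : t < 1 by rewrite /t ltr_pdivrMr ?mul1r; lra.
  have tl k : t * l k < w k.
    have := sj k; rewrite ler_pdivrMr // => h.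
    rewrite /t mul1r mulrC ltr_pdivrMr; last by lra.
    have := wpos k; nra.
  pose b k := (w k - t * l k) / (1 - t).
  have t10 : 1 - t != 0 by rewrite subr_eq0 eq_sym lt_eqF.
  have b0 k : 0 <= b k.
    by rewrite /b divr_ge0 // subr_ge0 ltW //.
  have bsum : \sum_(k < n) b k = 1.
    by rewrite /b -mulr_suml sumrB -mulr_sumr wsum ls mulr1 divff.
  have bmom i : \sum_(k < n) b k * phi i (x k) = 0.
    rewrite (eq_bigr (fun k => (w k * phi i (x k) - t * (l k * phi i (x k))) / (1 - t))).
      by rewrite -mulr_suml sumrB -mulr_sumr wmom' lm mulr0 subr0 mul0r.
    by move=> k _; rewrite /b mulrAC mulrBl mulrA.
  pose nu1 := @dmeas _ (Borel X) R n x l l0.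
  pose nu2 := @dmeas _ (Borel X) R n x b b0.
  have P1 : Cset phi nu1.
    by split; [rewrite /nu1 dmeasE sumT ls | move=> i; rewrite int_dmeas // lm].
  have P2 : Cset phi nu2.
    by split; [rewrite /nu2 dmeasE sumT bsum | move=> i; rewrite int_dmeas // bmom].
  have hmix A : measurable A -> mu A = (t%:E * nu1 A + (1 - t)%:E * nu2 A)%E.
    move=> mA; rewrite hmu // /nu1 /nu2 !dmeasE.
    have dE (c : 'I_n -> R) : (\sum_(k < n) (c k)%:E * @dirac _ (Borel X) (x k) R A =
       (\sum_(k < n) c k * (x k \in A)%:R)%:E)%E.
      by rewrite -sumEFin; apply: eq_bigr => k _; rewrite diracE.
    rewrite !dE -!EFinM -EFinD; congr (_%:E).
    rewrite !mulr_sumr -big_split; apply: eq_bigr => k _ /=.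
    rewrite /b; field; exact: t10.
  have := ext nu1 nu2 t P1 P2 _ hmix [set x j] (mx j).
  rewrite /nu1 /nu2 !dmeas1 // => /(_ _)/eqP; rewrite eqe => /(_ _)/eqP.
  rewrite t0 t1 => /(_ isT) hj.
  have : l j * (1 - t) = w j - t * l j by rewrite {1}hj /b divfK.
  have := tl j; have := wpos j; nra.
move=> [lam [lpos lsum /rowE lmom U]].
have U' : forall lam' : 'I_n -> R, (forall j, 0 < lam' j) -> \sum_(j < n) lam' j = 1 ->
    (forall i, \sum_(j < n) lam' j * phi i (x j) = 0) -> forall j, lam' j = w j.
  move=> l lp ls lm j; rewrite (U l lp ls _ j); last exact/rowE.
  by rewrite (U w wpos wsum _ j) //; apply/rowE.
split; first exact: Cmu.
move=> nu1 nu2 t P1 P2 /andP[t0 t1] hmix A mA.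
have muS : mu (~` SS) = 0%E.
  rewrite hmu; last exact: measurableC.
  rewrite big1 // => j _; rewrite diracE memNset ?mule0 // => h; apply: h.
  by rewrite /SS /S; apply/(@memU _ (Borel X) n xpredT); exists j.
have := hmix _ (measurableC mSS); rewrite muS => /esym/eqP.
rewrite padde_eq0 ?mule_ge0 ?lee_fin ?measure_ge0 ?(ltW t0) ?subr_ge0 ?(ltW t1) //.
rewrite !mule_eq0 !eqe (gt_eqF t0) subr_eq0 (gt_eqF t1) /= => /andP[/eqP h1 /eqP h2].
by rewrite (concen nu1 P1 h1 U' A mA) (concen nu2 P2 h2 U' A mA).
Qed.
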